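(* Let $S$ be a commutative $\Gamma$-hemiring, let $\mu$ be a fuzzy h-interior-ideal of $S$ and let $x\in S$. Then $\langle x,\mu\rangle$ is a fuzzy h-interior-ideal of $S$.
   Context: A $\Gamma$-hemiring is a pair of additive commutative semigroups with zero $S$ and $\Gamma$ with a map $S\times\Gamma\times S\to S$, $(a,\alpha,b)\mapsto a\alpha b$, such that for all $a,b,c\in S$, $\alpha,\beta\in\Gamma$: $(a+b)\alpha c=a\alpha c+b\alpha c$; $a\alpha(b+c)=a\alpha b+a\alpha c$; $a(\alpha+\beta)b=a\alpha b+a\beta b$; $a\alpha(b\beta c)=(a\alpha b)\beta c$; $0\alpha a=0=a\alpha0$; $a0b=0=b0a$. It is commutative if $a\alpha b=b\alpha a$ for all $a,b\in S$, $\alpha\in\Gamma$. A fuzzy h-ideal of $S$ is a map $\mu:S\to[0,1]$, not identically $0$, such that for all $x,y,a,b,z\in S$, $\gamma\in\Gamma$: $\mu(x+y)\ge\min\{\mu(x),\mu(y)\}$; $\mu(x\gamma y)\ge\mu(x)$ and $\mu(x\gamma y)\ge\mu(y)$; $x+a+z=b+z$ implies $\mu(x)\ge\min\{\mu(a),\mu(b)\}$. A fuzzy h-interior-ideal is a fuzzy h-ideal $\mu$ with $\mu(x\alpha y\beta z)\ge\mu(y)$ for all $x,y,z\in S$, $\alpha,\beta\in\Gamma$. The extension of $\mu$ by $x$ is $\langle x,\mu\rangle(y)=\inf_{s\in S,\ \alpha,\gamma\in\Gamma}\mu(x\alpha s\gamma y)$. *)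

(* Defs.v *)
From mathcomp Require Import all_boot all_order all_algebra.
From mathcomp Require Import boolp classical_sets reals.
Set Implicit Arguments. Unset Strict Implicit. Unset Printing Implicit Defensive.
Import Order.TTheory GRing.Theory Num.Theory.
Local Open Scope ring_scope.
Local Open Scope classical_set_scope.

Record GammaHemiring (S G : Type) := {
  addS : S -> S -> S;
  zeroS : S;
  addG : G -> G -> G;
  zeroG : G;
  gmul : S -> G -> S -> S;
  addSA : forall a b c, addS a (addS b c) = addS (addS a b) c;
  addSC : forall a b, addS a b = addS b a;
  add0S : forall a, addS zeroS a = a;
  addGA : forall a b c, addG a (addG b c) = addG (addG a b) c;
  addGC : forall a b, addG a b = addG b a;
  add0G : forall a, addG zeroG a = a;
  gmulDl : forall a b c al, gmul (addS a b) al c = addS (gmul a al c) (gmul b al c);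
  gmulDr : forall a b c al, gmul a al (addS b c) = addS (gmul a al b) (gmul a al c);
  gmulDm : forall a b al be, gmul a (addG al be) b = addS (gmul a al b) (gmul a be b);
  gmulA : forall a b c al be, gmul a al (gmul b be c) = gmul (gmul a al b) be c;
  gmul0l : forall a al, gmul zeroS al a = zeroS;
  gmul0r : forall a al, gmul a al zeroS = zeroS;
  gmul0m : forall a b, gmul a zeroG b = zeroS /\ gmul b zeroG a = zeroS
}.

Definition gh_commutative S G (H : GammaHemiring S G) : Prop :=
  forall a b al, gmul H a al b = gmul H b al a.

Definition fuzzy_h_ideal (R : realType) S G (H : GammaHemiring S G) (mu : S -> R) : Prop :=
  (forall x, 0 <= mu x <= 1) /\
  (exists x, mu x != 0) /\
  (forall x y, Num.min (mu x) (mu y) <= mu (addS H x y)) /\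
  (forall x y g, mu x <= mu (gmul H x g y) /\ mu y <= mu (gmul H x g y)) /\
  (forall x a b z, addS H (addS H x a) z = addS H b z ->
     Num.min (mu a) (mu b) <= mu x).

Definition fuzzy_h_interior_ideal (R : realType) S G (H : GammaHemiring S G)
    (mu : S -> R) : Prop :=
  fuzzy_h_ideal H mu /\
  (forall x y z al be, mu y <= mu (gmul H (gmul H x al y) be z)).

Definition extension (R : realType) S G (H : GammaHemiring S G) (x : S)
    (mu : S -> R) : S -> R :=
  fun y => inf [set r : R | exists (s : S) (al ga : G),
                  r = mu (gmul H (gmul H x al s) ga y)].

(* Main.v *)
Require Import Defs.
From mathcomp Require Import all_boot all_order all_algebra.
From mathcomp Require Import boolp classical_sets reals.
Set Implicit Arguments. Unset Strict Implicit. Unset Printing Implicit Defensive.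
Import Order.TTheory GRing.Theory Num.Theory.
Local Open Scope ring_scope.
Local Open Scope classical_set_scope.

Section Aux.
Variables (R : realType) (S G : Type) (H : GammaHemiring S G) (mu : S -> R) (x : S).

Lemma ext_le (mu0 : forall z, 0 <= mu z) y s al ga :
  extension H x mu y <= mu (gmul H (gmul H x al s) ga y).
Proof.
rewrite /extension; apply: ge_inf.
  by exists 0 => r [s' [al' [ga' ->]]].
by exists s, al, ga.
Qed.

Lemma ext_ge y r :
  (forall s al ga, r <= mu (gmul H (gmul H x al s) ga y)) ->
  r <= extension H x mu y.
Proof.
move=> h; rewrite /extension; apply: lb_le_inf.
  by exists (mu (gmul H (gmul H x (zeroG H) (zeroS H)) (zeroG H) y)); exists (zeroS H), (zeroG H), (zeroG H).
by move=> r' [s' [al' [ga' ->]]].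
Qed.
End Aux.

Theorem proposition3p9 (R : realType) (S G : Type) (H : GammaHemiring S G)
    (mu : S -> R) (x : S) :
  gh_commutative H -> fuzzy_h_interior_ideal H mu ->
  fuzzy_h_interior_ideal H (extension H x mu).
Proof.
move=> Hc [[H01 [[y0 Hy0] [Hadd [Hmul Hh]]]] Hint].
have mu0 : forall z, 0 <= mu z by move=> z; case/andP: (H01 z).
have EL := @ext_le _ _ _ H mu x mu0.
have Hz : forall s al ga, gmul H (gmul H x al s) ga (zeroS H) = zeroS H.
  by move=> s al ga; rewrite gmul0r.
have ext0 : extension H x mu (zeroS H) = mu (zeroS H).
  apply/eqP; rewrite eq_le; apply/andP; split.
    by rewrite -{2}(Hz (zeroS H) (zeroG H) (zeroG H)); apply: ext_le.
  by apply: ext_ge => s al ga; rewrite Hz.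
split; first split.
- move=> y; apply/andP; split.
    by apply: ext_ge => *.
  have /andP[_ h1] := H01 (gmul H (gmul H x (zeroG H) (zeroS H)) (zeroG H) y).
  exact: le_trans (EL y (zeroS H) (zeroG H) (zeroG H)) h1.
split.
  exists (zeroS H); rewrite ext0.
  have : mu y0 <= mu (zeroS H).
    by have [h _] := Hmul y0 y0 (zeroG H); have [e _] := gmul0m H y0 y0; rewrite e in h.
  move=> le; rewrite lt0r_neq0 //; apply: lt_le_trans le; rewrite lt_neqAle eq_sym Hy0 /=.
  exact: mu0.
split.
  move=> a b; apply: ext_ge => s al ga; rewrite gmulDr.
  apply: le_trans (Hadd _ _).
  by rewrite le_min !ge_min !EL ?orbT.
split.
  move=> a b g; split; apply: ext_ge => s al ga.
    rewrite gmulA; exact: le_trans (EL _ _ _ _) (proj1 (Hmul _ _ g)).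
  rewrite (Hc a b g) gmulA; exact: le_trans (EL _ _ _ _) (proj1 (Hmul _ _ g)).
move=> y a b z E; apply: ext_ge => s al ga.
apply: le_trans (Hh _ (gmul H (gmul H x al s) ga a) (gmul H (gmul H x al s) ga b)
   (gmul H (gmul H x al s) ga z) _).
  by rewrite le_min !ge_min !EL ?orbT.
by rewrite -!gmulDr E.
move=> u y v al' be'; apply: ext_ge => s al ga.
rewrite gmulA gmulA.
have -> : gmul H (gmul H x al s) ga u = gmul H x al (gmul H s ga u) by rewrite gmulA.
exact: le_trans (EL _ _ _ _) (proj1 (Hmul _ v be')).
Qed.
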